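(* In the lamination game described in the context, suppose the allocation $\alpha$ is locally free, i.e. almost surely $\alpha$ does not assign two consecutive slots $k-1,k$ to the same player (equivalently $b_{i,k}=0$ whenever $a_{i,k}>0$). Then player $i$'s unique dominant strategy is passthrough pricing, i.e. choosing a target depth $s_i$ whose marginal price equals the reference price: $\phi(s_i)=p_{\mathcal{O}}$.
   Context: A market is given by a price density function $\phi:U\to\mathbb{R}$ on an open set $U\subseteq(0,\infty)$, monotone decreasing (continuously differentiable); its argument is the liquidity depth. Fix a reference depth $x_{\mathcal{O}}>0$ and write $p_{\mathcal{O}}=\phi(x_{\mathcal{O}})$. The opportunity cost function is $C(x)=p_{\mathcal{O}}(x-x_{\mathcal{O}})+\int_x^{x_{\mathcal{O}}}\phi(u)\,du$. The game has $N$ players, $K$ liquidity orders of signed sizes $r_1,\dots,r_K$, an allocation $\alpha:\{0,\dots,K\}\to\{1,\dots,N\}$, and an initial depth $x_0>0$, where $x_0,(r_k),\alpha$ are random. Each player $i$ chooses a target depth $s_i\in A\subset(0,\infty)$. Conventions: $r_0=0$, $\alpha(-1)=0$, $s_0=x_0$. Utility: $U_i(\vec s)=\sum_{j:\alpha(j)=i}[C(s_{\alpha(j-1)}+r_j)-C(s_i)]$, and players maximize expected utility; $|C(s+r)|$ is assumed bounded by an integrable function. Primary weights $a_{i,k}=\mathbb{P}[\alpha(k)=i]$, secondary weights $b_{i,k}=\mathbb{P}[\alpha(k-1)=i\mid\alpha(k)=i]$. *)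

(* Defs.v *)
From HB Require Import structures.
From mathcomp Require Import all_boot all_order all_algebra.
From mathcomp Require Import all_classical all_reals all_analysis.
Set Implicit Arguments. Unset Strict Implicit. Unset Printing Implicit Defensive.
Import Order.TTheory GRing.Theory Num.Theory.
Import numFieldNormedType.Exports.
Local Open Scope classical_set_scope.
Local Open Scope ring_scope.

Definition oriented_integral {R : realType} (f : R -> R) (a b : R) : R :=
  if a <= b then Rintegral lebesgue_measure `[a, b] f
  else - Rintegral lebesgue_measure `[b, a] f.

Definition opp_cost {R : realType} (phi : R -> R) (xO x : R) : R :=
  phi xO * (x - xO) + oriented_integral phi x xO.

(* Convention alpha(-1) = 0 : previous slot of j (slot 0 has predecessor "player" 0). *)
Definition prev_player (alpha : nat -> nat) (j : nat) : nat :=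
  match j with 0 => 0%N | j'.+1 => alpha j' end.

Definition depth_of {R : realType} (s : nat -> R) (x0 : R) (i : nat) : R :=
  if i == 0%N then x0 else s i.

Definition order_size {R : realType} (r : nat -> R) (j : nat) : R :=
  if j == 0%N then 0 else r j.

(* Realized utility of player i for profile s (s i = target depth of player i, 1<=i<=N),
   with orders r_1..r_K, allocation alpha : {0..K} -> {1..N}, initial depth x0. *)
Definition utility {R : realType} (phi : R -> R) (xO : R) (K : nat)
    (alpha : nat -> nat) (r : nat -> R) (x0 : R) (s : nat -> R) (i : nat) : R :=
  \sum_(0 <= j < K.+1 | alpha j == i)
     (opp_cost phi xO (depth_of s x0 (prev_player alpha j) + order_size r j)
      - opp_cost phi xO (s i)).

Definition exp_utility {R : realType} {d : measure_display} {Omega : measurableType d}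
    (P : probability Omega R) (phi : R -> R) (xO : R) (K : nat)
    (alpha : nat -> Omega -> nat) (r : nat -> Omega -> R) (x0 : Omega -> R)
    (s : nat -> R) (i : nat) : \bar R :=
  (\int[P]_w (utility phi xO K (fun k => alpha k w) (fun k => r k w) (x0 w) s i)%:E)%E.

Definition update {R : realType} (s : nat -> R) (i : nat) (t : R) : nat -> R :=
  fun j => if j == i then t else s j.

Definition dominant {R : realType} {d : measure_display} {Omega : measurableType d}
    (P : probability Omega R) (phi : R -> R) (xO : R) (N K : nat)
    (alpha : nat -> Omega -> nat) (r : nat -> Omega -> R) (x0 : Omega -> R)
    (A : set R) (i : nat) (si : R) : Prop :=
  A si /\
  forall s : nat -> R, (forall j, (1 <= j <= N)%N -> A (s j)) ->
  forall t, A t ->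
    (exp_utility P phi xO K alpha r x0 (update s i t) i
     <= exp_utility P phi xO K alpha r x0 (update s i si) i)%E.

(* Main.v *)
Require Import Defs.
From HB Require Import structures.
From mathcomp Require Import all_boot all_order all_algebra.
From mathcomp Require Import all_classical all_reals all_analysis.
From mathcomp Require Import measurable_realfun lra.
Import Order.TTheory GRing.Theory Num.Theory.
Import numFieldNormedType.Exports.
Local Open Scope classical_set_scope.
Local Open Scope ring_scope.


Lemma int_split (R : realType) (f : R -> R) (a b c : R) : a <= b -> b <= c ->
  lebesgue_measure.-integrable `[a, c] (EFin \o f) ->
  Rintegral lebesgue_measure `[a, c] f =
  Rintegral lebesgue_measure `[a, b] f + Rintegral lebesgue_measure `[b, c] f.
Proof.
move=> ab bc itf.
have := @Rintegral_itvB R f (BLeft a) (BRight c) b itf.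
rewrite !bnd_simp => /(_ ab bc) H.
rewrite -(@Rintegral_itv_obnd_cbnd R b (BRight c) f); last first.
  by apply: integrableS itf => //; apply: subset_itvr; rewrite bnd_simp.
rewrite -H; lra.
Qed.

Lemma phi_int (R : realType) (U : set R) (phi : R -> R) a b :
  (forall x y, U x -> U y -> `[x, y] `<=` U) ->
  {in U, forall x, derivable phi x 1} -> U a -> U b ->
  lebesgue_measure.-integrable `[a, b] (EFin \o phi).
Proof.
move=> hU hd Ua Ub.
apply: continuous_compact_integrable; first exact: segment_compact.
apply: derivable_within_continuous => z zab; apply: hd.
by rewrite inE; apply: (hU a b Ua Ub).
Qed.

Lemma phi_cont (R : realType) (U : set R) (phi : R -> R) x :
  {in U, forall x, derivable phi x 1} -> U x -> {for x, continuous phi}.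
Proof.
move=> hd Ux; apply/differentiable_continuous; rewrite -derivable1_diffP.
by apply: hd; rewrite inE.
Qed.

Lemma cst_int (R : realType) (c a b : R) :
  lebesgue_measure.-integrable `[a, b] (EFin \o (fun _ : R => c)).
Proof.
apply: continuous_compact_integrable; first exact: segment_compact.
by apply: continuous_subspaceT => z; exact: cvg_cst.
Qed.

Lemma Rint_cst (R : realType) (c a b : R) : a <= b ->
  Rintegral lebesgue_measure `[a, b] (fun _ : R => c) = c * (b - a).
Proof.
move=> ab; rewrite Rintegral_cst //= lebesgue_measure_itv /=.
rewrite lte_fin; case: ifPn => [_|]; first by [].
rewrite -leNgt => ba; have -> : b = a by apply/le_anti; rewrite ab ba.
by rewrite subrr !mulr0.
Qed.

Lemma OI_add (R : realType) (U : set R) (phi : R -> R) x y z :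
  (forall x y, U x -> U y -> `[x, y] `<=` U) ->
  {in U, forall x, derivable phi x 1} -> U x -> U y -> U z ->
  oriented_integral phi x z = oriented_integral phi x y + oriented_integral phi y z.
Proof.
move=> hU hd Ux Uy Uz.
have sp a b c : U a -> U c -> a <= b -> b <= c ->
    Rintegral lebesgue_measure `[a, c] phi =
    Rintegral lebesgue_measure `[a, b] phi + Rintegral lebesgue_measure `[b, c] phi.
  move=> Ua Uc ab bc; apply: int_split => //; exact: (@phi_int _ _ _ _ _ hU hd Ua Uc).
rewrite /oriented_integral.
case: (leP x y) => xy; case: (leP y z) => yz; case: (leP x z) => xz.
- by rewrite (sp x y z).
- lra.
- have := sp x z y Ux Uy xz (ltW yz); lra.
- have := sp z x y Uz Uy (ltW xz) xy; lra.
- have := sp y x z Uy Uz (ltW xy) xz; lra.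
- have := sp y z x Uy Ux yz (ltW xz); lra.
- lra.
- have := sp z y x Uz Ux (ltW yz) (ltW xy); lra.
Qed.

Lemma C_diff (R : realType) (U : set R) (phi : R -> R) xO x y :
  (forall x y, U x -> U y -> `[x, y] `<=` U) ->
  {in U, forall x, derivable phi x 1} -> U xO -> U x -> U y ->
  opp_cost phi xO y - opp_cost phi xO x = phi xO * (y - x) - oriented_integral phi x y.
Proof.
move=> hU hd UO Ux Uy; rewrite /opp_cost (@OI_add _ _ _ x y xO hU hd Ux Uy UO); lra.
Qed.

Lemma Rint_le (R : realType) (U : set R) (phi : R -> R) x y c :
  (forall x y, U x -> U y -> `[x, y] `<=` U) ->
  {in U, forall x, derivable phi x 1} -> U x -> U y -> x <= y ->
  (forall z, x <= z -> z <= y -> phi z <= c) ->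
  Rintegral lebesgue_measure `[x, y] phi <= c * (y - x).
Proof.
move=> hU hd Ux Uy xy hc.
rewrite -(@Rint_cst _ c x y xy); apply: le_Rintegral => //.
- exact: (@phi_int _ _ _ _ _ hU hd Ux Uy).
- exact: cst_int.
- by move=> z; rewrite /= in_itv /= => /andP[? ?]; apply: hc.
Qed.

Lemma Rint_ge (R : realType) (U : set R) (phi : R -> R) x y c :
  (forall x y, U x -> U y -> `[x, y] `<=` U) ->
  {in U, forall x, derivable phi x 1} -> U x -> U y -> x <= y ->
  (forall z, x <= z -> z <= y -> c <= phi z) ->
  c * (y - x) <= Rintegral lebesgue_measure `[x, y] phi.
Proof.
move=> hU hd Ux Uy xy hc.
rewrite -(@Rint_cst _ c x y xy); apply: le_Rintegral => //.
- exact: cst_int.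
- exact: (@phi_int _ _ _ _ _ hU hd Ux Uy).
- by move=> z; rewrite /= in_itv /= => /andP[? ?]; apply: hc.
Qed.

Lemma Rint_lt (R : realType) (U : set R) (phi : R -> R) x y c :
  (forall x y, U x -> U y -> `[x, y] `<=` U) ->
  {in U, forall x, derivable phi x 1} -> U x -> U y -> x < y ->
  (forall z, x <= z -> z <= y -> phi z <= c) -> phi y < c ->
  Rintegral lebesgue_measure `[x, y] phi < c * (y - x).
Proof.
move=> hU hd Ux Uy xy hc hyc.
have ct := @phi_cont _ _ _ _ hd Uy.
have e0 : 0 < (c - phi y) / 2 by rewrite divr_gt0 // subr_gt0.
have H := (cvgrPdist_lt _ _).1 ct _ e0.
have H' : \forall t \near y, `|phi y - phi t| < (c - phi y) / 2 by apply: H.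
have [del /= del0 hb] := (nbhs_ballP _ _).1 H'.
set m := Num.max x (y - del / 2).
have xm : x <= m by rewrite le_max lexx.
have my : m < y by rewrite gt_max xy /=; lra.
have Um : U m by apply: (hU x y Ux Uy); rewrite /= in_itv /= xm (ltW my).
rewrite (@int_split _ phi x m y xm (ltW my)); last exact: (@phi_int _ _ _ _ _ hU hd Ux Uy).
have h1 := @Rint_le _ _ _ x m c hU hd Ux Um xm
  (fun z xz zm => hc z xz (le_trans zm (ltW my))).
have h2 : Rintegral lebesgue_measure `[m, y] phi <= (c - (c - phi y) / 2) * (y - m).
  apply: (@Rint_le _ _ _ m y _ hU hd Um Uy (ltW my)) => z mz zy.
  have : ball y del z.
    rewrite /ball /= ger0_norm ?subr_ge0 //.
    have : y - del / 2 <= m by rewrite le_max lexx orbT.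
    lra.
  move/hb => /=; rewrite ltr_norml; lra.
have : 0 < (c - phi y) / 2 * (y - m) by apply: mulr_gt0 => //; rewrite subr_gt0.
nra.
Qed.

Lemma Rint_gt (R : realType) (U : set R) (phi : R -> R) x y c :
  (forall x y, U x -> U y -> `[x, y] `<=` U) ->
  {in U, forall x, derivable phi x 1} -> U x -> U y -> x < y ->
  (forall z, x <= z -> z <= y -> c <= phi z) -> c < phi x ->
  c * (y - x) < Rintegral lebesgue_measure `[x, y] phi.
Proof.
move=> hU hd Ux Uy xy hc hyc.
have ct := @phi_cont _ _ _ _ hd Ux.
have e0 : 0 < (phi x - c) / 2 by rewrite divr_gt0 // subr_gt0.
have H := (cvgrPdist_lt _ _).1 ct _ e0.
have H' : \forall t \near x, `|phi x - phi t| < (phi x - c) / 2 by apply: H.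
have [del /= del0 hb] := (nbhs_ballP _ _).1 H'.
set m := Num.min y (x + del / 2).
have my : m <= y by rewrite ge_min lexx.
have xm : x < m by rewrite lt_min xy /=; lra.
have Um : U m by apply: (hU x y Ux Uy); rewrite /= in_itv /= my (ltW xm).
rewrite (@int_split _ phi x m y (ltW xm) my); last exact: (@phi_int _ _ _ _ _ hU hd Ux Uy).
have h1 := @Rint_ge _ _ _ m y c hU hd Um Uy my
  (fun z mz zy => hc z (le_trans (ltW xm) mz) zy).
have h2 : (c + (phi x - c) / 2) * (m - x) <= Rintegral lebesgue_measure `[x, m] phi.
  apply: (@Rint_ge _ _ _ x m _ hU hd Ux Um (ltW xm)) => z xz zm.
  have : ball x del z.
    rewrite /ball /= ler0_norm ?subr_le0 //.
    have : m <= x + del / 2 by rewrite ge_min lexx orbT.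
    lra.
  move/hb => /=; rewrite ltr_norml; lra.
have : 0 < (phi x - c) / 2 * (m - x) by apply: mulr_gt0 => //; rewrite subr_gt0.
nra.
Qed.

Lemma C_min (R : realType) (U : set R) (phi : R -> R) xO si t :
  (forall x y, U x -> U y -> `[x, y] `<=` U) ->
  {in U, forall x, derivable phi x 1} ->
  (forall x y, U x -> U y -> x <= y -> phi y <= phi x) ->
  U xO -> U si -> U t -> phi si = phi xO ->
  opp_cost phi xO si <= opp_cost phi xO t.
Proof.
move=> hU hd hm UO Us Ut ps.
have := @C_diff _ _ _ xO si t hU hd UO Us Ut.
rewrite /oriented_integral; case: leP => st.
- have := @Rint_le _ _ _ si t (phi xO) hU hd Us Ut st.
  have : forall z, si <= z -> z <= t -> phi z <= phi xO.
    move=> z sz zt; rewrite -ps; apply: hm => //.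
    by apply: (hU si t Us Ut); rewrite /= in_itv /= sz zt.
  move=> H /(_ H); lra.
- have := @Rint_ge _ _ _ t si (phi xO) hU hd Ut Us (ltW st).
  have : forall z, t <= z -> z <= si -> phi xO <= phi z.
    move=> z tz zs; rewrite -ps; apply: hm => //.
    by apply: (hU t si Ut Us); rewrite /= in_itv /= tz zs.
  move=> H /(_ H); lra.
Qed.

Lemma C_strict (R : realType) (U : set R) (phi : R -> R) xO si ss :
  (forall x y, U x -> U y -> `[x, y] `<=` U) ->
  {in U, forall x, derivable phi x 1} ->
  (forall x y, U x -> U y -> x <= y -> phi y <= phi x) ->
  U xO -> U si -> U ss -> phi ss = phi xO -> phi si <> phi xO ->
  opp_cost phi xO ss < opp_cost phi xO si.
Proof.
move=> hU hd hm UO Us Uss pss psi.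
have := @C_diff _ _ _ xO ss si hU hd UO Uss Us.
have [lt|gt] : phi si < phi xO \/ phi xO < phi si.
  by case: (ltgtP (phi si) (phi xO)) psi => [h _|h _|-> //]; [left|right].
- have sss : ss < si.
    rewrite ltNge; apply/negP => sis.
    have := hm si ss Us Uss sis; lra.
  rewrite /oriented_integral (ltW sss).
  have := @Rint_lt _ _ _ ss si (phi xO) hU hd Uss Us sss.
  have : forall z, ss <= z -> z <= si -> phi z <= phi xO.
    move=> z sz zt; rewrite -pss; apply: hm => //.
    by apply: (hU ss si Uss Us); rewrite /= in_itv /= sz zt.
  move=> H /(_ H lt); lra.
- have sss : si < ss.
    rewrite ltNge; apply/negP => sis.
    have := hm ss si Uss Us sis; lra.
  rewrite /oriented_integral leNgt sss /=.
  have := @Rint_gt _ _ _ si ss (phi xO) hU hd Us Uss sss.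
  have : forall z, si <= z -> z <= ss -> phi xO <= phi z.
    move=> z sz zt; rewrite -pss; apply: hm => //.
    by apply: (hU si ss Us Uss); rewrite /= in_itv /= sz zt.
  move=> H /(_ H gt); lra.
Qed.
Import HBNNSimple.

Definition nnI (R : realType) (f : R -> \bar R) : \bar R :=
  ereal_sup [set sintegral (@lebesgue_measure R) h |
    h in [set h : {nnsfun (measurableTypeR R) >-> R} | forall x, ((h x)%:E <= f x)%E]].

Arguments nnI {R}.

Lemma integral_nnI (R : realType) (D : set R) (f : R -> \bar R) :
  (\int[lebesgue_measure]_(x in D) f x = nnI ((f \_ D)^\+) - nnI ((f \_ D)^\-))%E.
Proof. by []. Qed.

Lemma nnI_le (R : realType) (f g : R -> \bar R) :
  (forall x, f x <= g x)%E -> (nnI f <= nnI g)%E.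
Proof.
move=> fg; apply: le_ereal_sup => _ [h hf <-]; exists h => //= x.
exact: le_trans (hf x) (fg x).
Qed.

Lemma pos_restrict_le (R : realType) (D1 D2 : set R) (f : R -> \bar R) :
  D1 `<=` D2 -> forall x, ((f \_ D1)^\+ x <= (f \_ D2)^\+ x)%E.
Proof.
move=> D12 x; rewrite !funeposE !patchE.
case: ifPn => xD1; first by rewrite mem_set //; apply: D12; exact: set_mem.
by rewrite maxxx le_max lexx orbT.
Qed.

Lemma neg_restrict_le (R : realType) (D1 D2 : set R) (f : R -> \bar R) :
  D1 `<=` D2 -> forall x, ((f \_ D1)^\- x <= (f \_ D2)^\- x)%E.
Proof.
move=> D12 x; rewrite !funenegE !patchE.
case: ifPn => xD1; first by rewrite mem_set //; apply: D12; exact: set_mem.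
by rewrite oppe0 maxxx le_max lexx orbT.
Qed.

Lemma nonincr_emeas (R : realType) (F : R -> \bar R) :
  (forall x y : R, x <= y -> (F y <= F x)%E) -> measurable_fun setT F.
Proof.
move=> hF; apply: (measurability _ (ErealGenCInfty.measurableE R)) => //.
move=> _ [_ [x ->] <-]; rewrite setTI; apply: is_interval_measurable.
move=> a b /=; rewrite !in_itv /= !andbT => Fa Fb z /andP[az zb].
by rewrite in_itv /= andbT (le_trans Fb (hF _ _ zb)).
Qed.

Lemma nondecr_emeas (R : realType) (F : R -> \bar R) :
  (forall x y : R, x <= y -> (F x <= F y)%E) -> measurable_fun setT F.
Proof.
move=> hF; apply: (measurability _ (ErealGenCInfty.measurableE R)) => //.
move=> _ [_ [x ->] <-]; rewrite setTI; apply: is_interval_measurable.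
move=> a b /=; rewrite !in_itv /= !andbT => Fa Fb z /andP[az zb].
by rewrite in_itv /= andbT (le_trans Fa (hF _ _ az)).
Qed.

Lemma C_meas (R : realType) (phi : R -> R) (xO : R) :
  measurable_fun setT (opp_cost phi xO).
Proof.
have mL : measurable_fun setT
    (fun x => \int[lebesgue_measure]_(z in `[x, xO]) (phi z)%:E)%E.
  under eq_fun do rewrite integral_nnI.
  apply: emeasurable_funB; apply: nonincr_emeas => x y xy.
  - apply: nnI_le; apply: pos_restrict_le => z /=; rewrite !in_itv /=.
    by case/andP => yz ->; rewrite (le_trans xy yz).
  - apply: nnI_le; apply: neg_restrict_le => z /=; rewrite !in_itv /=.
    by case/andP => yz ->; rewrite (le_trans xy yz).
have mR : measurable_fun setT
    (fun x => \int[lebesgue_measure]_(z in `[xO, x]) (phi z)%:E)%E.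
  under eq_fun do rewrite integral_nnI.
  apply: emeasurable_funB; apply: nondecr_emeas => x y xy.
  - apply: nnI_le; apply: pos_restrict_le => z /=; rewrite !in_itv /=.
    by case/andP => -> zx; rewrite (le_trans zx xy).
  - apply: nnI_le; apply: neg_restrict_le => z /=; rewrite !in_itv /=.
    by case/andP => -> zx; rewrite (le_trans zx xy).
rewrite /opp_cost /oriented_integral.
apply: measurable_funD.
  by apply: measurable_funM => //; apply: measurable_funB.
apply: measurable_fun_ifT.
- by apply: measurable_fun_ler.
- exact: measurableT_comp mL.
- by apply: measurable_funN; exact: measurableT_comp mR.
Qed.

Definition cnt {d} {Omega : measurableType d} (R : realType) (alpha : nat -> Omega -> nat)
  (K i : nat) (w : Omega) : R := \sum_(0 <= j < K.+1 | alpha j w == i) 1.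

Definition Vf {d} {Omega : measurableType d} {R : realType} (C : R -> R) (K : nat)
  (alpha : nat -> Omega -> nat) (r : nat -> Omega -> R) (x0 : Omega -> R)
  (s : nat -> R) (i : nat) (w : Omega) : R :=
  \sum_(0 <= j < K.+1 | alpha j w == i)
     C (depth_of s (x0 w) (prev_player (fun k => alpha k w) j) + order_size (fun k => r k w) j).

Lemma util_eq {d} {Omega : measurableType d} {R : realType} (phi : R -> R) xO K
  (alpha : nat -> Omega -> nat) (r : nat -> Omega -> R) (x0 : Omega -> R) s i w :
  utility phi xO K (fun k => alpha k w) (fun k => r k w) (x0 w) s i =
  Vf (opp_cost phi xO) K alpha r x0 s i w - cnt R alpha K i w * opp_cost phi xO (s i).
Proof.
by rewrite /utility sumrB /Vf /cnt big_distrl /=; congr (_ - _); apply: eq_bigr => j _; rewrite mul1r.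
Qed.

Lemma V_update {d} {Omega : measurableType d} {R : realType} (C : R -> R) K
  (alpha : nat -> Omega -> nat) (r : nat -> Omega -> R) (x0 : Omega -> R) s i t w :
  (forall k, (1 <= k <= K)%N -> alpha k w != alpha k.-1 w) ->
  Vf C K alpha r x0 (update s i t) i w = Vf C K alpha r x0 s i w.
Proof.
move=> good; rewrite /Vf [LHS]big_mkcond [RHS]big_mkcond /=; apply: eq_big_nat => j /andP[_ jK].
case: ifP => // /eqP aj; congr (C (_ + _)).
case: j aj jK => [|m] aj jK //=.
rewrite /depth_of /update; case: ifP => // _; case: ifP => // /eqP ami.
by have := good m.+1 jK; rewrite aj ami eqxx.
Qed.

Lemma nat_meas {R : realType} (f : nat -> R) : measurable_fun setT f.
Proof. by []. Qed.

Lemma nat_measb (f : nat -> bool) : measurable_fun setT f.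
Proof. by []. Qed.

Lemma cnt_meas {d} {Omega : measurableType d} (R : realType) (alpha : nat -> Omega -> nat) K i :
  (forall k, measurable_fun setT (alpha k)) -> measurable_fun setT (cnt R alpha K i).
Proof.
move=> ma; rewrite /cnt.
have -> : (fun w => \sum_(0 <= j < K.+1 | alpha j w == i) (1:R)) =
    (fun w => \sum_(j <- index_iota 0 K.+1) (fun m : nat => if m == i then (1:R) else 0) (alpha j w)).
  by apply/funext => w; rewrite big_mkcond.
apply: measurable_sum => j.
exact: (measurableT_comp (nat_meas (fun m : nat => if m == i then (1:R) else 0)) (ma j)).
Qed.

Lemma V_meas {d} {Omega : measurableType d} {R : realType} (C : R -> R) K
  (alpha : nat -> Omega -> nat) (r : nat -> Omega -> R) (x0 : Omega -> R) s i :
  measurable_fun setT C ->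
  (forall k, measurable_fun setT (alpha k)) -> (forall k, measurable_fun setT (r k)) ->
  measurable_fun setT x0 -> measurable_fun setT (Vf C K alpha r x0 s i).
Proof.
move=> mC ma mr mx; rewrite /Vf.
have -> : (fun w => \sum_(0 <= j < K.+1 | alpha j w == i)
     C (depth_of s (x0 w) (prev_player (fun k => alpha k w) j) + order_size (fun k => r k w) j)) =
    (fun w => \sum_(j <- index_iota 0 K.+1) (if alpha j w == i then
     C (depth_of s (x0 w) (prev_player (fun k => alpha k w) j) + order_size (fun k => r k w) j)
     else 0)).
  by apply/funext => w; rewrite big_mkcond.
apply: measurable_sum => j; apply: measurable_fun_ifT.
- exact: (measurableT_comp (nat_measb (fun m : nat => m == i)) (ma j)).
- apply: (measurableT_comp mC); case: j => [|m].
    rewrite /depth_of /order_size /=; apply: measurable_funD => //.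
  rewrite /depth_of /order_size /=; apply: measurable_funD => //.
  apply: measurable_fun_ifT.
  + exact: (measurableT_comp (nat_measb (fun m : nat => m == 0%N)) (ma m)).
  + exact: mx.
  + exact: (measurableT_comp (nat_meas s) (ma m)).
- exact: measurable_cst.
Qed.

Lemma V_int {d} {Omega : measurableType d} {R : realType} (mu : {measure set Omega -> \bar R})
  (C : R -> R) (N K : nat) (A : set R) (g : Omega -> R)
  (alpha : nat -> Omega -> nat) (r : nat -> Omega -> R) (x0 : Omega -> R) s i :
  measurable_fun setT C ->
  (forall k, measurable_fun setT (alpha k)) -> (forall k, measurable_fun setT (r k)) ->
  measurable_fun setT x0 ->
  mu.-integrable setT (EFin \o g) ->
  (forall w, `|C (x0 w)| <= g w) ->
  (forall s k w, A s -> (1 <= k <= K)%N -> `|C (s + r k w)| <= g w) ->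
  (forall k w, (k <= K)%N -> (1 <= alpha k w <= N)%N) ->
  (forall j, (1 <= j <= N)%N -> A (s j)) ->
  mu.-integrable setT (EFin \o Vf C K alpha r x0 s i).
Proof.
move=> mC ma mr mx ig hb0 hbk ha hs.
have g0 w : 0 <= g w := le_trans (normr_ge0 _) (hb0 w).
apply: (@le_integrable _ _ _ mu setT measurableT _ (fun w => (K.+1%:R)%:E * (EFin \o g) w)%E).
- exact/measurable_EFinP/V_meas.
- move=> w _; rewrite /comp -EFinM !abse_EFin lee_fin (ger0_norm (mulr_ge0 (ler0n _ _) (g0 w))).
  rewrite /Vf; apply: le_trans (ler_norm_sum _ _ _) _.
  have -> : K.+1%:R * g w = \sum_(0 <= j < K.+1) g w by rewrite sumr_const_nat subn0 mulr_natl.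
  rewrite big_mkcond /=; apply: ler_sum_nat => j /andP[_ jK]; case: ifP => _; last exact: g0.
  case: j jK => [|m] jK /=.
  + rewrite /depth_of /order_size /= addr0; exact: hb0.
  + rewrite /depth_of /order_size /=.
    have /andP[a1 a2] := ha m w (ltnW jK).
    have -> : (alpha m w == 0%N) = false by case: (alpha m w) a1.
    by apply: hbk => //; apply: hs; rewrite a1 a2.
- exact: integrableZl.
Qed.

Lemma cnt_ge0 {d} {Omega : measurableType d} (R : realType) (alpha : nat -> Omega -> nat) K i w :
  0 <= cnt R alpha K i w.
Proof. by apply: sumr_ge0 => j _; exact: ler01. Qed.

Lemma cnt_le {d} {Omega : measurableType d} (R : realType) (alpha : nat -> Omega -> nat) K i w :
  cnt R alpha K i w <= K.+1%:R.
Proof.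
rewrite /cnt big_mkcond /=.
have -> : K.+1%:R = \sum_(0 <= j < K.+1) (1:R) by rewrite sumr_const_nat subn0.
by apply: ler_sum_nat => j _; case: ifP => _ //; exact: ler01.
Qed.

Lemma cnt_ge1 {d} {Omega : measurableType d} (R : realType) (alpha : nat -> Omega -> nat) K i w k :
  (k <= K)%N -> alpha k w = i -> 1 <= cnt R alpha K i w.
Proof.
move=> kK ak; rewrite /cnt big_mkcond /= (@big_cat_nat _ _ _ k) //=; last exact: ltnW.
rewrite [X in _ + X]big_ltn ?ltnS // ak eqxx.
have h1 : 0 <= \sum_(0 <= j < k) (if alpha j w == i then (1:R) else 0).
  by apply: sumr_ge0 => j _; case: ifP => _ //; exact: ler01.
have h2 : 0 <= \sum_(k.+1 <= j < K.+1) (if alpha j w == i then (1:R) else 0).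
  by apply: sumr_ge0 => j _; case: ifP => _ //; exact: ler01.
lra.
Qed.

Lemma cnt_int {d} {Omega : measurableType d} {R : realType} (P : probability Omega R)
  (alpha : nat -> Omega -> nat) K i :
  (forall k, measurable_fun setT (alpha k)) ->
  P.-integrable setT (EFin \o cnt R alpha K i).
Proof.
move=> ma; apply: (@le_integrable _ _ _ P setT measurableT _ (EFin \o cst K.+1%:R)).
- exact/measurable_EFinP/cnt_meas.
- move=> w _; rewrite /comp !abse_EFin lee_fin ger0_norm ?cnt_ge0 // ger0_norm //.
  exact: cnt_le.
- exact: finite_measure_integrable_cst.
Qed.

Lemma cnt_pos {d} {Omega : measurableType d} {R : realType} (P : probability Omega R)
  (alpha : nat -> Omega -> nat) K i :
  (forall k, measurable_fun setT (alpha k)) ->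
  (exists k, (k <= K)%N /\ (0 < P [set w | alpha k w = i])%E) ->
  (0 < \int[P]_w (cnt R alpha K i w)%:E)%E.
Proof.
move=> ma [k [kK Pk]].
have mS : measurable [set w | alpha k w = i].
  by rewrite -[X in measurable X]setTI; apply: (ma k measurableT [set i]).
apply: (lt_le_trans Pk).
rewrite -(setIT [set w | alpha k w = i]) -(integral_indic P measurableT mS).
apply: ge0_le_integral => //.
- exact/measurable_EFinP/measurable_indic.
- exact/measurable_EFinP/cnt_meas.
- move=> w _; rewrite lee_fin indicE; case: (boolP (w \in _)) => [/set_mem|] /= h.
    exact: cnt_ge1 kK h.
  exact: cnt_ge0.
Qed.

Lemma key (R : realType) (d : measure_display) (Omega : measurableType d)
    (P : probability Omega R) (phi : R -> R) (xO : R) (A : set R) (N K : nat)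
    (alpha : nat -> Omega -> nat) (r : nat -> Omega -> R) (x0 : Omega -> R) (i : nat) :
  measurable_fun setT x0 ->
  (forall k, measurable_fun setT (r k)) ->
  (forall k, measurable_fun setT (alpha k)) ->
  (forall k w, (k <= K)%N -> (1 <= alpha k w <= N)%N) ->
  (exists g : Omega -> R, P.-integrable setT (EFin \o g) /\
     (forall w, `|opp_cost phi xO (x0 w)| <= g w) /\
     (forall s k w, A s -> (1 <= k <= K)%N ->
        `|opp_cost phi xO (s + r k w)| <= g w)) ->
  {ae P, forall w, forall k, (1 <= k <= K)%N -> alpha k w != alpha k.-1 w} ->
  (exists k, (k <= K)%N /\ (0 < P [set w | alpha k w = i])%E) ->
  forall s, (forall j, (1 <= j <= N)%N -> A (s j)) ->
  exists a b : R, 0 < b /\ forall t,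
    exp_utility P phi xO K alpha r x0 (update s i t) i = (a - b * opp_cost phi xO t)%:E.
Proof.
move=> mx mr ma ha [g [ig [hb0 hbk]]] hgood hpart s hs.
set C := opp_cost phi xO.
have mC : measurable_fun setT C := @C_meas R phi xO.
have iV := @V_int _ _ _ P C N K A g alpha r x0 s i mC ma mr mx ig hb0 hbk ha hs.
have iN := cnt_int P alpha K i ma.
have fV := integrable_fin_num measurableT iV.
have fN := integrable_fin_num measurableT iN.
have pN := cnt_pos P alpha K i ma hpart.
exists (fine (\int[P]_w (Vf C K alpha r x0 s i w)%:E)).
exists (fine (\int[P]_w (cnt R alpha K i w)%:E)).
split.
  by apply: fine_gt0; rewrite pN /= -ge0_fin_numE // ltW.
move=> t; rewrite /exp_utility.
under eq_integral do rewrite util_eq.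
rewrite /update eqxx -/(update s i t) -/C.
rewrite (ae_eq_integral (fun w => (Vf C K alpha r x0 s i w - cnt R alpha K i w * C t)%:E)) //.
- under eq_integral do rewrite EFinB.
  rewrite integralB_EFin //; last first.
    under eq_fun do rewrite mulrC.
    rewrite (_ : EFin \o (fun x => C t * cnt R alpha K i x) =
      (fun x => (C t)%:E * (EFin \o cnt R alpha K i) x)%E); last first.
      by apply/funext => x /=; rewrite EFinM.
    exact: integrableZl.
  rewrite [X in (_ - X)%E](eq_integral (fun x => (cnt R alpha K i x)%:E * (C t)%:E)%E); last by move=> x _; rewrite EFinM.
  rewrite integralZr //.
  by rewrite -(fineK fV) -(fineK fN) -EFinM -EFinB.
- apply/measurable_EFinP; apply: measurable_funB.
    exact: V_meas.
  by apply: measurable_funM => //; exact: cnt_meas.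
- apply/measurable_EFinP; apply: measurable_funB.
    exact: V_meas.
  by apply: measurable_funM => //; exact: cnt_meas.
- apply: filterS hgood => w gw _.
  by rewrite V_update.
Qed.

Theorem mainTheorem2 (R : realType) (d : measure_display) (Omega : measurableType d)
    (P : probability Omega R)
    (U : set R) (phi : R -> R) (xO : R) (A : set R) (N K : nat)
    (alpha : nat -> Omega -> nat) (r : nat -> Omega -> R) (x0 : Omega -> R) (i : nat) :
  (* the price density *)
  open U -> U `<=` [set x | 0 < x] ->
  (forall x y, U x -> U y -> `[x, y] `<=` U) ->
  {in U, forall x, derivable phi x 1} -> {within U, continuous (derive1 phi)} ->
  (forall x y, U x -> U y -> x <= y -> phi y <= phi x) ->
  U xO -> 0 < xO ->
  (* strategy set *)
  A `<=` U -> A `<=` [set x | 0 < x] ->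
  (exists s, A s /\ phi s = phi xO) ->
  (* the random primitives *)
  (forall w, 0 < x0 w) -> measurable_fun setT x0 ->
  (forall k, measurable_fun setT (r k)) ->
  (forall k, measurable_fun setT (alpha k)) ->
  (forall k w, (k <= K)%N -> (1 <= alpha k w <= N)%N) ->
  (* integrability: |C(s + r)| bounded by an integrable function *)
  (exists g : Omega -> R, P.-integrable setT (EFin \o g) /\
     (forall w, `|opp_cost phi xO (x0 w)| <= g w) /\
     (forall s k w, A s -> (1 <= k <= K)%N ->
        `|opp_cost phi xO (s + r k w)| <= g w)) ->
  (* locally free allocation *)
  {ae P, forall w, forall k, (1 <= k <= K)%N -> alpha k w != alpha k.-1 w} ->
  (* player i actually participates *)
  (1 <= i <= N)%N ->
  (exists k, (k <= K)%N /\ (0 < P [set w | alpha k w = i])%E) ->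
  forall si, A si ->
    (dominant P phi xO N K alpha r x0 A i si <-> phi si = phi xO).
Proof.
move=> oU Upos hU hd hcd hm UO xO0 AU Apos [ss [Ass pss]] x0pos mx mr ma ha hg hgood hi
  hpart si Asi.
have hK := @key R d Omega P phi xO A N K alpha r x0 i mx mr ma ha hg hgood hpart.
split.
- move=> [_ hdom].
  have [//|/eqP hne] := eqVneq (phi si) (phi xO).
  have hs : forall j, (1 <= j <= N)%N -> A ((fun _ : nat => si) j) by move=> j _.
  have [a [b [b0 hab]]] := hK _ hs.
  have := hdom _ hs ss Ass.
 rewrite !hab lee_fin => h.
  have := @C_strict _ _ _ xO si ss hU hd hm UO (AU si Asi) (AU ss Ass) pss hne.
  move: h; rewrite lerD2l lerN2 (ler_pM2l b0) => h lt.
  have hh := lt_le_trans lt h.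
  rewrite ltxx in hh.
  discriminate hh.
- move=> psi; split; first exact: Asi.
  move=> s hs t At.
  have [a [b [b0 hab]]] := hK s hs.
  rewrite !hab lee_fin lerD2l lerN2 (ler_pM2l b0).
  exact: (@C_min _ _ _ xO si t hU hd hm UO (AU si Asi) (AU t At) psi).
Qed.
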